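(* Let $f$ be a non-increasing differentiable function with a monotone hazard rate (i.e. $\frac{|f'(x)|}{f(x)}$ is non-decreasing in $x$). Let $x_1<x_2$ be points in its domain such that $f(0)=\sqrt e\,f(x_1)\le e\,f(x_2)$. Then $x_2\le 2x_1$. *)

(* Defs.v *)
From Stdlib Require Import Reals.
From Coquelicot Require Import Coquelicot.
Open Scope R_scope.

Definition hazard (f : R -> R) (x : R) : R := Rabs (Derive f x) / f x.

(* Main.v *)
Require Import Defs.
From Stdlib Require Import Reals Lra.
From Coquelicot Require Import Coquelicot.
Open Scope R_scope.

Lemma deriv_nonpos (f : R -> R) c
  (hdiff : ex_derive f c)
  (hnoninc : forall x y, c <= x -> x <= y -> f y <= f x) :
  Derive f c <= 0.
Proof.
  destruct (Rle_lt_dec (Derive f c) 0) as [H|H]; [exact H|].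
  exfalso.
  pose proof (Derive_correct f c hdiff) as D.
  apply is_derive_Reals in D.
  destruct (D (Derive f c) H) as [del Hd].
  assert (hp : 0 < del / 2) by (destruct del; simpl; lra).
  assert (hne : del / 2 <> 0) by lra.
  assert (hlt : Rabs (del / 2) < del) by (rewrite Rabs_pos_eq; destruct del; simpl in *; lra).
  specialize (Hd (del/2) hne hlt).
  assert (hq : (f (c + del/2) - f c) / (del/2) <= 0).
  { unfold Rdiv. apply Rmult_le_0_r.
    - assert (f (c + del/2) <= f c) by (apply hnoninc; lra). lra.
    - left. apply Rinv_0_lt_compat; lra. }
  apply Rabs_def2 in Hd. lra.
Qed.

Theorem lemma21 (f : R -> R)
  (hpos : forall x, 0 <= x -> 0 < f x)
  (hdiff : forall x, 0 <= x -> ex_derive f x)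
  (hnoninc : forall x y, 0 <= x -> x <= y -> f y <= f x)
  (hmhr : forall x y, 0 <= x -> x <= y -> hazard f x <= hazard f y)
  (x1 x2 : R) (hx1 : 0 <= x1) (hx12 : x1 < x2)
  (heq : f 0 = sqrt (exp 1) * f x1)
  (hle : sqrt (exp 1) * f x1 <= exp 1 * f x2) :
  x2 <= 2 * x1.
Proof.
  pose (g := fun x : R => ln (f x)).
  pose (dg := fun x : R => Derive f x / f x).
  assert (Hg : forall x, 0 <= x -> is_derive g x (dg x)).
  { intros x hx. unfold g, dg.
    pose proof (hpos x hx). pose proof (Derive_correct f x (hdiff x hx)).
    apply (is_derive_comp ln f x (/ f x) (Derive f x)) in H0.
    - unfold Rdiv. exact H0.
    - apply is_derive_ln; exact H. }
  assert (Hc : forall x, 0 <= x -> continuity_pt g x).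
  { intros x hx. apply continuity_pt_filterlim.
    apply (ex_derive_continuous (K:=R_AbsRing) (V:=R_NormedModule) g x). eexists. apply Hg; exact hx. }
  assert (Hh : forall x, 0 <= x -> hazard f x = - dg x).
  { intros x hx. unfold hazard, dg.
    rewrite Rabs_left1.
    - unfold Rdiv. ring.
    - apply deriv_nonpos. apply hdiff; exact hx.
      intros a b ha hb. apply hnoninc; lra. }
  assert (se : sqrt (exp 1) * sqrt (exp 1) = exp 1)
    by (apply sqrt_sqrt; left; apply exp_pos).
  assert (sp : 0 < sqrt (exp 1)) by (apply sqrt_lt_R0; apply exp_pos).
  assert (lse : ln (sqrt (exp 1)) = 1/2).
  { assert (ln (sqrt (exp 1) * sqrt (exp 1)) = 1) by (rewrite se; apply ln_exp).
    rewrite ln_mult in H by lra. lra. }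
  assert (f1 := hpos x1 hx1). assert (f2 := hpos x2 ltac:(lra)).
  assert (g0 : g 0 = 1/2 + g x1).
  { unfold g. rewrite heq, ln_mult by lra. lra. }
  assert (g2 : g x1 <= 1/2 + g x2).
  { unfold g. rewrite <- lse, <- ln_mult by lra. apply ln_le. lra.
    apply (Rmult_le_reg_l (sqrt (exp 1))). lra. rewrite <- Rmult_assoc, se. lra. }
  destruct (Req_dec x1 0) as [z|nz].
  { subst x1. lra. }
  destruct (MVT_gen g 0 x1 dg) as [c1 [Hc1 E1]].
  { intros x hx. apply Hg. rewrite Rmin_left in hx by lra. lra. }
  { intros x hx. apply Hc. rewrite Rmin_left in hx by lra. lra. }
  destruct (MVT_gen g x1 x2 dg) as [c2 [Hc2 E2]].
  { intros x hx. apply Hg. rewrite Rmin_left in hx by lra. lra. }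
  { intros x hx. apply Hc. rewrite Rmin_left in hx by lra. lra. }
  rewrite Rmin_left in Hc1 by lra. rewrite Rmax_right in Hc1 by lra.
  rewrite Rmin_left in Hc2 by lra. rewrite Rmax_right in Hc2 by lra.
  assert (M : hazard f c1 <= hazard f c2) by (apply hmhr; lra).
  rewrite !Hh in M by lra.
  assert (pos : 0 < - dg c1) by nra.
  nra.
Qed.
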